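(* Let $v\equiv 4\pmod 6$. If a $(v,3,2)$-BIBD $(X,\mathcal{A})$ has a strong nesting $\phi:\mathcal{A}\to Y$ with $X\subseteq Y$ and $|Y|=w$, then $w\ge 3v/2+1$.
   Context: A $(v,k,\lambda)$-BIBD is a pair $(X,\mathcal{A})$ where $X$ is a set of $v$ points and $\mathcal{A}$ is a multiset of $k$-subsets of $X$ (blocks) such that every pair of distinct points lies in exactly $\lambda$ blocks. Given a $(v,k,\lambda)$-BIBD $(X,\mathcal{A})$ and a set $Y\supseteq X$ with $|Y|=w$, a map $\phi:\mathcal{A}\to Y$ is a strong nesting if (1) $\phi(A)\notin A$ for every block $A\in\mathcal{A}$, and (2) the multiset of pairs $\{\{x,\phi(A)\}: A\in\mathcal{A},\ x\in A\}$ (one pair for each block $A$, counted with multiplicity in $\mathcal{A}$, and each $x\in A$) consists of distinct pairs. *)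

(* Defs.v *)
From mathcomp Require Import all_boot.
Set Implicit Arguments. Unset Strict Implicit. Unset Printing Implicit Defensive.

(* A (v,k,lambda)-BIBD with point set X (a subset of the ambient finite type Y)
   and blocks given as a family B : 'I_b -> {set Y} (a multiset of blocks:
   repetitions allowed, indexed by 'I_b). *)
Definition is_BIBD (Y : finType) (X : {set Y}) (b : nat) (B : 'I_b -> {set Y})
    (v k lambda : nat) : Prop :=
  #|X| = v /\
  (forall i, B i \subset X /\ #|B i| = k) /\
  (forall x y, x \in X -> y \in X -> x != y ->
     #|[set i | (x \in B i) && (y \in B i)]| = lambda).

Definition strong_nesting (Y : finType) (b : nat) (B : 'I_b -> {set Y})
    (phi : 'I_b -> Y) : Prop :=
  (forall i, phi i \notin B i) /\
  (forall i j x y, x \in B i -> y \in B j ->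
     [set x; phi i] = [set y; phi j] -> i = j /\ x = y).

(* Main.v *)
Require Import Defs.
From mathcomp Require Import all_boot zify.
Set Implicit Arguments. Unset Strict Implicit. Unset Printing Implicit Defensive.

Definition PS (Y : finType) (b : nat) (B : 'I_b -> {set Y}) (phi : 'I_b -> Y) z :=
  [set p : 'I_b * Y | (phi p.1 == z) && (p.2 \in B p.1)].

Lemma card_PS (Y : finType) (b : nat) (B : 'I_b -> {set Y}) (phi : 'I_b -> Y) z :
  (forall i, #|B i| = 3) -> #|PS B phi z| = 3 * #|[set i | phi i == z]|.
Proof.
move=> H3.
have -> : #|PS B phi z| = \sum_(i | phi i == z) \sum_(y in B i) 1.
  by rewrite pair_big_dep /= sum1dep_card.
rewrite (eq_bigr (fun _ => 3)) => [|i _]; last by rewrite sum1_card H3.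
by rewrite sum_nat_cond_const mulnC.
Qed.

Lemma card_U2 (Y : finType) (b : nat) (B : 'I_b -> {set Y}) (phi : 'I_b -> Y) z :
  (forall i, #|B i| = 3) -> strong_nesting B phi ->
  #|[set p.2 | p in PS B phi z]| = 3 * #|[set i | phi i == z]|.
Proof.
move=> H3 [_ Hs]; rewrite card_in_imset ?card_PS //.
move=> [i y] [j y'] ; rewrite !inE /= => /andP[/eqP ei yi] /andP[/eqP ej yj] eyy.
subst y'; have [-> _] := Hs i j y y yi yj ltac:(by rewrite ei ej).
by [].
Qed.

Lemma boundB (Y : finType) (b : nat) (B : 'I_b -> {set Y}) (phi : 'I_b -> Y) x :
  (forall i, #|B i| = 3) -> strong_nesting B phi ->
  #|[set i | x \in B i]| + 3 * #|[set i | phi i == x]| <= #|Y|.-1.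
Proof.
move=> H3 Hn; have [Hnot Hs] := Hn.
rewrite -(card_U2 x H3 Hn) -(card_in_imset (f := phi)); last first.
  move=> i j; rewrite !inE => xi xj e.
  by have [] := Hs i j x x xi xj ltac:(by rewrite e).
set U1 := phi @: _; set U2 := [set _ | _ in _].
have dis : [disjoint U1 & U2].
  apply/pred0P => y /=; apply/negbTE/negP => /andP[/imsetP[i] + ->].
  rewrite inE => xi /imsetP[[j y']] /=; rewrite inE /= => /andP[/eqP ej yj] ey.
  subst y'.
  have [eij exy] := Hs i j x (phi i) xi yj ltac:(by rewrite ej setUC).
  by subst j; move: (Hnot i); rewrite -exy xi.
have -> : #|U1| + #|U2| = #|U1 :|: U2|.
  by rewrite cardsU (disjoint_setI0 dis) cards0 subn0.
rewrite -(cardsC1 x) subset_leq_card //.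
apply/subsetP => y; rewrite !inE => /orP[/imsetP[i]|/imsetP[[j y']]].
  by rewrite inE => xi ->; apply/eqP => e; move: (Hnot i); rewrite e xi.
rewrite inE /= => /andP[/eqP ej yj] ->; apply/eqP => e.
by move: (Hnot j); rewrite ej -e yj.
Qed.

Lemma sum_bool (T : finType) (A : {pred T}) (P : pred T) :
  \sum_(y in A) (P y : nat) = #|[set y | (y \in A) && P y]|.
Proof.
by rewrite -sum1dep_card big_mkcondr /=; apply: eq_bigr => y _; case: (P y).
Qed.

Lemma boundC (Y : finType) (X : {set Y}) (b : nat) (B : 'I_b -> {set Y}) (phi : 'I_b -> Y) z :
  (forall i, B i \subset X /\ #|B i| = 3) -> strong_nesting B phi ->
  3 * #|[set i | phi i == z]| <= #|X|.
Proof.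
move=> HB Hn; rewrite -(card_U2 z (fun i => (HB i).2) Hn) subset_leq_card //.
apply/subsetP => y /imsetP[[j y']]; rewrite inE /= => /andP[_ yj] ->.
exact: (subsetP (HB j).1).
Qed.

Lemma rx (Y : finType) (X : {set Y}) (b : nat) (B : 'I_b -> {set Y}) x :
  is_BIBD X B #|X| 3 2 -> x \in X -> #|[set i | x \in B i]| = #|X|.-1.
Proof.
move=> [_ [HB Hl]] xX.
have E1 : \sum_(y in X :\ x) #|[set i | (x \in B i) && (y \in B i)]| = #|X :\ x| * 2.
  rewrite -sum_nat_const; apply: eq_bigr => y; rewrite !inE => /andP[yx yX].
  by apply: Hl; rewrite // eq_sym.
have E2 : \sum_(y in X :\ x) #|[set i | (x \in B i) && (y \in B i)]| =
          \sum_i (x \in B i) * 2.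
  under eq_bigr => y _ do rewrite -[#|_|]/#|[set i | (i \in predT) && ((x \in B i) && (y \in B i))]| -sum_bool.
  rewrite exchange_big /=; apply: eq_bigr => i _.
  case xi: (x \in B i); last by rewrite big1.
  rewrite mul1n sum_bool.
  rewrite (@eq_card _ _ (B i :\ x)); last first.
    move=> y; rewrite !inE /=.
    case yi: (y \in B i); last by rewrite !andbF.
    by rewrite (subsetP (HB i).1 y yi) !andbT.
  by move: (HB i).2; rewrite (cardsD1 x) xi; case.
move: E1; rewrite E2 -big_distrl /= => /eqP; rewrite eqn_mul2r /= => /eqP.
rewrite sum_bool => ->.
rewrite (cardsD1 x X) xX /=.
by apply: eq_card => i; rewrite !inE.
Qed.

Theorem lemma4p4 (Y : finType) (X : {set Y}) (b : nat) (B : 'I_b -> {set Y})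
    (phi : 'I_b -> Y) :
  #|X| %% 6 = 4 ->
  is_BIBD X B #|X| 3 2 ->
  strong_nesting B phi ->
  3 * #|X| + 2 <= 2 * #|Y|.
Proof.
move=> Hv HBIBD Hn.
have HB := HBIBD.2.1.
have H3 : forall i, #|B i| = 3 by move=> i; exact: (HB i).2.
have Eb3 : b * 3 = #|X| * #|X|.-1.
  have -> : b * 3 = \sum_i #|B i|.
    by rewrite (eq_bigr (fun _ => 3)) // sum_nat_const card_ord.
  have E : forall i, #|B i| = \sum_(x in X) (x \in B i).
    move=> i; rewrite sum_bool; apply: eq_card => x; rewrite !inE.
    by case xi: (x \in B i); rewrite ?andbF // (subsetP (HB i).1 x xi).
  rewrite (eq_bigr _ (fun i _ => E i)).
  rewrite exchange_big /= -sum_nat_const; apply: eq_bigr => x xX.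
  rewrite -(rx HBIBD xX) sum_bool; apply: eq_card => i; rewrite !inE //.
have Eb : b = \sum_y #|[set i | phi i == y]|.
  have E : forall y, #|[set i | phi i == y]| = \sum_(i in predT) (phi i == y).
    by move=> y; rewrite sum_bool; apply: eq_card => i; rewrite !inE.
  rewrite (eq_bigr _ (fun y _ => E y)).
  rewrite exchange_big /= -[in LHS](card_ord b) -sum1_card; apply: eq_bigr => i _.
  rewrite sum_bool -(cards1 (phi i)); apply: eq_card => y; rewrite !inE eq_sym //.
rewrite (bigID (fun y => y \in X)) /= in Eb.
set q := (#|Y| - #|X|) %/ 3.
have S1 : \sum_(y | y \in X) #|[set i | phi i == y]| <= #|X| * q.
  rewrite (@leq_trans (\sum_(y | y \in X) q)) //.
    apply: leq_sum => y yX; have := boundB y H3 Hn; rewrite (rx HBIBD yX).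
    rewrite /q; have : 0 < #|X| by apply/card_gt0P; exists y.
    lia.
  rewrite sum_nat_cond_const; apply: leq_mul => //.
  by apply: subset_leq_card; apply/subsetP => y; rewrite inE.
have S2 : 3 * \sum_(y | y \notin X) #|[set i | phi i == y]| <= (#|Y| - #|X|) * #|X|.
  rewrite big_distrr /= (@leq_trans (\sum_(y | y \notin X) #|X|)) //.
    by apply: leq_sum => y _; apply: (boundC y HB Hn).
  rewrite sum_nat_cond_const; apply: leq_mul => //.
  rewrite -(cardsC X); rewrite addnC addnK; apply: eq_leq; apply: eq_card => y; rewrite !inE //.
have q0 : 3 * q <= #|Y| - #|X| by rewrite /q; lia.
rewrite leqNgt; apply/negP => Hc.
have [t Ev] : exists t, #|X| = 6 * t + 4 by exists (#|X| %/ 6); lia.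
have Hq : q <= t by lia.
have Hw : #|Y| - #|X| <= 3 * t + 2 by lia.
move: Eb3 Eb S1 S2 Hq Hw; rewrite Ev.
move=> Eb3 Eb S1 S2 Hq Hw.
move: Eb S1 S2 Hw; set s1 := \sum_(y | y \in X) _; set s2 := \sum_(y | y \notin X) _; set d := #|Y| - _.
move=> Eb S1 S2 Hw.
have h1 : (6 * t + 4) * q <= (6 * t + 4) * t by apply: leq_mul.
have h2 : d * (6 * t + 4) <= (3 * t + 2) * (6 * t + 4) by apply: leq_mul.
have h3 : b * 3 = (6 * t + 4) * (6 * t + 3) by rewrite Eb3; congr (_ * _); lia.
clear Eb3; clearbody q s1 s2 d.
nia.
Qed.
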